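(* Let $\mathcal{M}$, $(E_d)$ be as in the context and let $F=f^iE_i$ satisfy $\mathrm{Div}(F)=E_i[f^i]=0$. For any planar trees $t_1,\dots,t_p$ ($p\ge0$), the elementary differential of the aroma consisting of the single tree with a free edge $(t_1\cdots t_p\,\times)\curvearrowright\bullet$ vanishes: $$\mathcal{F}^F\big(((t_1\cdots t_p\,\times)\curvearrowright\bullet)_\circlearrowleft\big)=\sum_{i}\Big(\big(\mathcal{F}^F(t_1)\cdots\mathcal{F}^F(t_p)\,E_i\big)\rhd F\Big)^i=0.$$
   Context: Einstein summation is used. $\mathcal{M}$ is a smooth manifold with a global frame $E_1,\dots,E_n$ whose Jacobi brackets have constant structure constants. For vector fields $X_k=x_k^iE_i$, a function $\phi$ and $Y=y^jE_j$, the frozen product acts by $(X_1\cdots X_p)\rhd\phi=x_1^{i_1}\cdots x_p^{i_p}E_{i_1}[\cdots E_{i_p}[\phi]\cdots]$ and $(X_1\cdots X_p)\rhd Y=((X_1\cdots X_p)\rhd y^j)E_j$; $Z^i$ denotes the $i$-th frame component of a vector field $Z$. Planar rooted trees (one decoration $\bullet$): $(t_1\cdots t_p)\curvearrowright\bullet$ is the tree whose root has ordered children subtrees $t_1,\dots,t_p$. Elementary differentials: $\mathcal{F}^F(\bullet)=F$, $\mathcal{F}^F((t_1\cdots t_p)\curvearrowright\bullet)=(\mathcal{F}^F(t_1)\cdots\mathcal{F}^F(t_p))\rhd F$. For the tree with a free edge $u=(t_1\cdots t_p\,\times)\curvearrowright\bullet$ (root with children $t_1,\dots,t_p$ followed by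 an empty input $\times$), $\mathcal{F}^F(u)(X)=(\mathcal{F}^F(t_1)\cdots\mathcal{F}^F(t_p)X)\rhd F$, and the aroma $(u)_\circlearrowleft$ is mapped to the function $\mathcal{F}^F(u)^{i}(E_{i})$ (summed over $i$). *)

(* Defs.v *)
From HB Require Import structures.
From mathcomp Require Import all_boot all_order all_algebra.
From mathcomp Require Import reals.
Set Implicit Arguments. Unset Strict Implicit. Unset Printing Implicit Defensive.
Import Order.TTheory GRing.Theory Num.Theory.
Local Open Scope ring_scope.

(* Algebraic model of (M, E_1..E_n): A plays the role of C^oo(M) (a commutative
   R-algebra), E i : A -> A are the frame vector fields acting as R-linear
   derivations, whose brackets have constant structure constants c i j k. *)
Definition is_frame (R : realType) (A : comAlgType R) (n : nat)
  (E : 'I_n -> {linear A -> A}) (c : 'I_n -> 'I_n -> 'I_n -> R) : Prop :=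
  (forall i (f g : A), E i (f * g) = E i f * g + f * E i g) /\
  (forall i j (f : A), E i (E j f) - E j (E i f) = \sum_k c i j k *: E k f).

(* A vector field Z = Z^i E_i is represented by its frame components. *)
Definition vfield (A : Type) (n : nat) := 'I_n -> A.

Definition frame_vf (A : nzRingType) (n : nat) (i : 'I_n) : vfield A n :=
  fun j => if j == i then 1 else 0.

Section Frozen.
Variables (R : realType) (A : comAlgType R) (n : nat) (E : 'I_n -> {linear A -> A}).

(* frz [X_1;..;X_p] D phi = x_1^{i_1}..x_p^{i_p} D(E_{i_1}[..E_{i_p}[phi]..]) *)
Fixpoint frz (Xs : seq (vfield A n)) (D : A -> A) (phi : A) : A :=
  match Xs with
  | [::] => D phi
  | X :: Xs' => \sum_i X i * frz Xs' (fun psi => D (E i psi)) phi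
  end.

Definition frozen (Xs : seq (vfield A n)) (phi : A) : A := frz Xs id phi.

Definition frozen_vf (Xs : seq (vfield A n)) (Y : vfield A n) : vfield A n :=
  fun j => frozen Xs (Y j).

Definition Div (F : vfield A n) : A := \sum_i E i (F i).
End Frozen.

(* Planar rooted trees with one decoration: (t_1 ... t_p) ~> bullet *)
Inductive ptree : Type := PNode of seq ptree.

Section ElemDiff.
Variables (R : realType) (A : comAlgType R) (n : nat) (E : 'I_n -> {linear A -> A}).
Variable F : vfield A n.

Fixpoint ED (t : ptree) : vfield A n :=
  match t with PNode ts => frozen_vf E (map ED ts) F end.

(* Tree with free edge u = (t_1..t_p x) ~> bullet : X |-> (F(t_1)..F(t_p) X) |> F *)
Definition ED_free (ts : seq ptree) (X : vfield A n) : vfield A n :=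
  frozen_vf E (rcons (map ED ts) X) F.

Definition ED_aroma_free (ts : seq ptree) : A :=
  \sum_i ED_free ts (frame_vf A i) i.
End ElemDiff.

(* Main.v *)
Require Import Defs.
From HB Require Import structures.
From mathcomp Require Import all_boot all_order all_algebra.
From mathcomp Require Import reals.
Import Order.TTheory GRing.Theory Num.Theory.
Local Open Scope ring_scope.

Section Aux.
Variables (R : realType) (A : comAlgType R) (n : nat) (E : 'I_n -> {linear A -> A}).

Lemma frz_last (Xs : seq (vfield A n)) (i : 'I_n) : forall (D : A -> A) phi,
  frz E (rcons Xs (frame_vf A i)) D phi = frz E Xs D (E i phi).
Proof.
elim: Xs => [|X Xs IH] D phi /=.
  rewrite (bigD1 i) //= big1 ?addr0 /frame_vf ?eqxx ?mul1r //.
  by move=> k /negbTE ->; rewrite mul0r.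
by apply: eq_bigr => j _; rewrite IH.
Qed.

Lemma frz_add (Xs : seq (vfield A n)) : forall (D : A -> A),
  (forall x y, D (x + y) = D x + D y) ->
  forall x y, frz E Xs D (x + y) = frz E Xs D x + frz E Xs D y.
Proof.
elim: Xs => [|X Xs IH] D HD x y /=; first exact: HD.
rewrite -big_split /=; apply: eq_bigr => j _.
rewrite IH ?mulrDr // => u v; by rewrite raddfD HD.
Qed.

Lemma frz_0 (Xs : seq (vfield A n)) : forall (D : A -> A),
  D 0 = 0 -> frz E Xs D 0 = 0.
Proof.
elim: Xs => [|X Xs IH] D HD /=; first exact: HD.
by rewrite big1 // => j _; rewrite IH ?mulr0 // raddf0.
Qed.
End Aux.

Theorem lemma6p8 (R : realType) (A : comAlgType R) (n : nat)
  (E : 'I_n -> {linear A -> A}) (c : 'I_n -> 'I_n -> 'I_n -> R)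
  (F : vfield A n) (ts : seq ptree) :
  is_frame E c -> Div E F = 0 -> ED_aroma_free E F ts = 0.
Proof.
move=> _ HF; rewrite /ED_aroma_free /ED_free /frozen_vf /frozen.
under eq_bigr => i _ do rewrite frz_last.
rewrite -(big_morph (frz E [seq ED E F i | i <- ts] id) (@frz_add R A n E _ id (fun _ _ => erefl)) (@frz_0 R A n E _ id (erefl (0:A)))).
by rewrite -/(Div E F) HF (@frz_0 R A n E)...
Qed.
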